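(* Fix $x_0\in\mathbb{R}^{n_x}$. There exist a finite positive constant $\alpha_1'(x_0)$ and, for each $i\in\{2,\dots,T+1\}$, a finite set $\mathcal{K}_i'$ of sequences of non-negative integers of length $i-1$ and finite positive constants $\alpha_i'^{(j_1,\dots,j_{i-1})}(x_0)$ (depending on $x_0$ and $(j_1,\dots,j_{i-1})$ but not on the observations or the control) such that for every $u\in U$ and every $(y_1,\dots,y_T)$, the trajectory $x$ of the hybrid system starting at $x_0$ satisfies: $|c(x_1(t),u(t))|\le\alpha_1'(x_0)$ for all $t\in[0,1]$; for all $i\in\{2,\dots,T\}$ and $t\in[i-1,i]$, $$|c(x_i(t),u(t))|\le\sum_{(j_1,\dots,j_{i-1})\in\mathcal{K}_i'}\alpha_i'^{(j_1,\dots,j_{i-1})}(x_0)\prod_{m=1}^{i-1}\|y_m\|_2^{j_m};$$ and $$|h(x(T))|\le\sum_{(j_1,\dots,j_T)\in\mathcal{K}_{T+1}'}\alpha_{T+1}'^{(j_1,\dots,j_T)}(x_0)\prod_{m=1}^{T}\|y_m\|_2^{j_m}.$$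
   Context: Fix positive integers $T,m,n_x,n_y$ and $\rho_{\max}\in(0,\infty)$; $B(0,\rho_{\max})$ is the closed Euclidean ball of radius $\rho_{\max}$ in $\mathbb{R}^m$; $U$ is the set of piecewise continuous $u:[0,T]\to\mathbb{R}^m$ with $\|u(t)\|_2\le\rho_{\max}$ for all $t$. $f:\mathbb{R}^{n_x}\times\mathbb{R}^m\to\mathbb{R}^{n_x}$ is continuously differentiable and there is $K_1\in[1,\infty)$ with $\|f(x',u')-f(x'',u'')\|_2\le K_1(\|x'-x''\|_2+\|u'-u''\|_2)$ for all $x',x''$ and $u',u''\in B(0,\rho_{\max})$. $g:\mathbb{R}^{n_x}\times\mathbb{R}^{n_y}\to\mathbb{R}^{n_x}$ is continuous and differentiable in its first argument, and there are $K_2,\dots,K_5\ge0$ and positive integers $L_1,L_2$ such that for all $x,y$ both $\|g(x,y)\|_2$ and $\|\frac{\partial}{\partial x}g(x,y)\|_2$ are at most $K_2+K_3\|x\|_2^{L_1}+K_4\|y\|_2^{L_2}+K_5\|x\|_2^{L_1}\|y\|_2^{L_2}$. The hybrid system: $x_1$ on $[0,1]$ solves $\dot x_1=f(x_1,u)$, $x_1(0)=x_0$; for $i=2,\dots,T$, $x_i$ on $[i-1,i]$ solves $\dot x_i=f(x_i,u)$ with $x_i(i-1)=g(x_{i-1}(i-1),y_{i-1})$; $x(t)=x_i(t)$ for $t\in[i-1,i)$, and $x(T)=g(x_T(T),y_T)$. Costs: $c:\mathbb{R}^{n_x}\times\mathbb{R}^m\to\mathbb{R}$ is continuous and continuously differentiable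 in $x$, $h:\mathbb{R}^{n_x}\to\mathbb{R}$ is differentiable, and there are $K_6,K_7\ge0$ and a positive integer $L_3$ such that $|c(x,u)|$, $\|\frac{\partial}{\partial x}c(x,u)\|_2$, $|h(x)|$, $\|\frac{\partial}{\partial x}h(x)\|_2$ are all at most $K_6+K_7\|x\|_2^{L_3}$ for all $x$ and $u\in B(0,\rho_{\max})$. *)

(* Defs.v *)
From HB Require Import structures.
From mathcomp Require Import all_boot all_order all_algebra.
From mathcomp Require Import all_classical all_reals all_analysis.
Set Implicit Arguments. Unset Strict Implicit. Unset Printing Implicit Defensive.
Import Order.TTheory GRing.Theory Num.Theory.
Import numFieldNormedType.Exports.
Local Open Scope classical_set_scope.
Local Open Scope ring_scope.

Section Defs.
Context {R : realType}.

Definition enorm {n : nat} (v : 'rV[R]_n) : R :=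
  Num.sqrt (\sum_(i < n) v ord0 i ^+ 2).

(* u : [a,b] -> V is piecewise continuous: there is a finite partition
   a = p_0 < p_1 < ... < p_k = b such that on each open piece (p_j, p_{j+1})
   u coincides with a function continuous on the closed piece [p_j, p_{j+1}]
   (i.e. u is continuous on the open piece with finite one-sided limits). *)
Definition piecewise_continuous {V : normedModType R} (a b : R) (u : R -> V) : Prop :=
  exists s : seq R,
    [/\ path <%R a s, last a s = b &
        forall k, (k < size s)%N ->
          exists v : R -> V,
            {within `[nth b (a :: s) k, nth b s k], continuous v} /\
            (forall t, nth b (a :: s) k < t < nth b s k -> u t = v t)].

Definition admissible_control {m : nat} (T : nat) (rho : R) (u : R -> 'rV[R]_m) : Prop :=
  piecewise_continuous 0 T%:R u /\ (forall t, 0 <= t <= T%:R -> enorm (u t) <= rho).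

(* x solves  x' = f(x, u)  on [a,b] with x(a) = xa (classical solution for a
   piecewise continuous control: x is continuous on [a,b] and differentiable
   with the prescribed derivative at all interior points outside a finite set). *)
Definition ode_solution {nx m : nat} (f : 'rV[R]_nx * 'rV[R]_m -> 'rV[R]_nx)
    (u : R -> 'rV[R]_m) (a b : R) (xa : 'rV[R]_nx) (x : R -> 'rV[R]_nx) : Prop :=
  [/\ x a = xa, {within `[a, b], continuous x} &
      exists s : seq R, forall t, a < t < b -> t \notin s ->
        is_derive t 1 x (f (x t, u t))].

(* The hybrid system trajectory: xs i (1 <= i <= T) is the piece x_i on [i-1, i]. *)
Definition hybrid_trajectory {nx m ny : nat} (T : nat)
    (f : 'rV[R]_nx * 'rV[R]_m -> 'rV[R]_nx) (g : 'rV[R]_nx -> 'rV[R]_ny -> 'rV[R]_nx)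
    (x0 : 'rV[R]_nx) (u : R -> 'rV[R]_m) (y : nat -> 'rV[R]_ny)
    (xs : nat -> R -> 'rV[R]_nx) : Prop :=
  ode_solution f u 0 1 x0 (xs 1%N) /\
  (forall i, (2 <= i <= T)%N ->
     ode_solution f u (i.-1)%:R i%:R (g (xs i.-1 (i.-1)%:R) (y i.-1)) (xs i)).

Definition final_state {nx ny : nat} (T : nat) (g : 'rV[R]_nx -> 'rV[R]_ny -> 'rV[R]_nx)
    (y : nat -> 'rV[R]_ny) (xs : nat -> R -> 'rV[R]_nx) : 'rV[R]_nx :=
  g (xs T T%:R) (y T).

Definition poly_bound {ny : nat} (i : nat) (K : seq (seq nat)) (alpha : seq nat -> R)
    (y : nat -> 'rV[R]_ny) : R :=
  \sum_(j <- K) alpha j * \prod_(mm < i.-1) enorm (y mm.+1) ^+ nth 0%N j mm.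

End Defs.

(* Main.v *)
Require Import Defs.
From HB Require Import structures.
From mathcomp Require Import all_boot all_order all_algebra.
From mathcomp Require Import all_classical all_reals all_analysis.
From mathcomp Require Import ring lra.
Import Order.TTheory GRing.Theory Num.Theory.
Import numFieldNormedType.Exports.
Local Open Scope classical_set_scope.
Local Open Scope ring_scope.
Set Implicit Arguments. Unset Strict Implicit.

Definition vsq {R : realType} {n} (v : 'rV[R]_n) : R := \sum_(i < n) v ord0 i ^+ 2.

Lemma vsq_ge0 (R : realType) n (v : 'rV[R]_n) : 0 <= vsq v.
Proof. by apply: sumr_ge0 => i _; rewrite sqr_ge0. Qed.

Lemma enorm_sq (R : realType) n (v : 'rV[R]_n) : enorm v ^+ 2 = vsq v.
Proof. by rewrite /enorm sqr_sqrtr // vsq_ge0. Qed.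

Lemma enorm_ge0 (R : realType) n (v : 'rV[R]_n) : 0 <= enorm v.
Proof. exact: sqrtr_ge0. Qed.

Lemma enorm0 (R : realType) n : enorm (0 : 'rV[R]_n) = 0.
Proof.
rewrite /enorm (eq_bigr (fun _ => 0)) ?big1 ?sqrtr0 // => i _.
by rewrite mxE expr0n.
Qed.

Lemma vsq_split (R : realType) n (v w : 'rV[R]_n) :
  vsq v <= 2 * vsq (v - w) + 2 * vsq w.
Proof.
rewrite /vsq !mulr_sumr -big_split /=; apply: ler_sum => i _.
rewrite !mxE; set p := v ord0 i; set q := w ord0 i.
have : 0 <= (p - 2 * q) ^+ 2 by rewrite sqr_ge0.
by rewrite !expr2; nra.
Qed.

Lemma vsq_cross (R : realType) n (v w : 'rV[R]_n) :
  \sum_(i < n) (2 * v ord0 i * w ord0 i) <= vsq v + vsq w.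
Proof.
rewrite /vsq -big_split /=; apply: ler_sum => i _.
have : 0 <= (v ord0 i - w ord0 i) ^+ 2 by rewrite sqr_ge0.
by rewrite !expr2; nra.
Qed.

Lemma le_sq_1 (R : realType) (z : R) : 0 <= z -> z <= 1 + z ^+ 2.
Proof. move=> z0; have : 0 <= (z - 1) ^+ 2 by rewrite sqr_ge0. rewrite !expr2; nra. Qed.

Lemma is_derive_coord (R : realType) n (x : R -> 'rV[R]_n) (t : R) (D : 'rV[R]_n) (i : 'I_n) :
  is_derive t 1 x D -> is_derive t 1 (fun s => x s ord0 i) (D ord0 i).
Proof.
move=> H.
have dx : derivable x t 1 by apply: ex_derive; exact: H.
have dc := (derivable_mxP x t 1).1 dx ord0 i.
have e := derive_mx dx.
rewrite derive_val in e.
apply: DeriveDef => //.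
by rewrite e mxE.
Qed.

Lemma is_derive_sq (R : realType) (g : R -> R) (t d : R) :
  is_derive t 1 g d -> is_derive t 1 (fun s => g s ^+ 2) (2 * g t * d).
Proof.
move=> H; have H2 := is_deriveM H H.
have -> : (fun s => g s ^+ 2) = g * g by apply/funext => s /=; rewrite expr2.
apply: DeriveDef; first by apply: ex_derive; exact: H2.
rewrite derive_val /GRing.scale /=; ring.
Qed.

Lemma continuous_vsq (R : realType) n : continuous (fun v : 'rV[R]_n => vsq v).
Proof.
have -> : (fun v : 'rV[R]_n => vsq v) = \sum_(i < n) (fun v : 'rV[R]_n => v ord0 i ^+ 2).
  by rewrite fct_sumE; apply/funext => v.
elim/big_rec: _ => [|i F _ cF]; first exact: cst_continuous.
have -> : (fun v : 'rV[R]_n => v ord0 i ^+ 2) = (fun v => v ord0 i) \* (fun v => v ord0 i).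
  by apply/funext => w /=; rewrite expr2.
move=> v; apply: continuousD => //.
apply: continuousM; apply: coord_continuous.
exact: cF.
Qed.
Lemma is_derive_expRk (R : realType) (k t : R) :
  is_derive t 1 (fun s => expR (k * s)) (k * expR (k * t)).
Proof.
have dl : derivable (fun s : R => k * s) t 1.
  apply/derivable1_diffP; apply: differentiableM => //.
have de : derivable (@expR R) (k * t) 1 := @derivable_expR R (k * t).
have dc : derivable (fun s => expR (k * s)) t 1.
  apply/derivable1_diffP.
  apply: (@differentiable_comp _ _ _ _ (fun s : R => k * s) expR).
    exact/derivable1_diffP.
  exact/derivable1_diffP.
apply: DeriveDef => //.
rewrite -derive1E.
have := derive1_comp dl de. rewrite /comp => ->.
rewrite derive1E derive_val.
rewrite derive1E.
have -> : 'D_1 (fun s : R => k * s) t = k.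
  rewrite (@deriveMl _ _ id k t 1 (@derivable_id _ _ t 1)) derive_val mulr1 //.
by rewrite mulrC.
Qed.
Lemma nonincr_fin (R : realType) (W : R -> R) (s : seq R) :
  forall a b, a <= b -> {within `[a, b], continuous W} ->
  (forall t, a < t < b -> t \notin s -> derivable W t 1 /\ (W^`())%classic t <= 0) ->
  W b <= W a.
Proof.
elim: s => [|p s IH] a b ab cW hW.
  apply: (@ler0_derive1_le_cc R W a b _ _ cW).
  - by move=> x; rewrite in_itv /= => /hW => /(_ isT) [].
  - by move=> x; rewrite in_itv /= => /hW => /(_ isT) [].
  - by rewrite in_itv /= lexx ab.
  - by rewrite in_itv /= lexx ab.
  - exact: ab.
case: (boolP (a < p < b)) => [/andP[ap pb]|napb].
  apply: (@le_trans _ _ (W p)).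
    apply: IH; first exact: ltW.
      apply: continuous_subspaceW cW => x /=; rewrite !in_itv /= => /andP[h1 h2].
      by rewrite h2 andbT (le_trans (ltW ap)).
    move=> t /andP[pt tb] tns; apply: hW; first by rewrite (lt_trans ap pt).
    by rewrite in_cons negb_or tns andbT gt_eqF.
  apply: IH; first exact: ltW.
    apply: continuous_subspaceW cW => x /=; rewrite !in_itv /= => /andP[h1 h2].
    by rewrite h1 (le_trans h2 (ltW pb)).
  move=> t /andP[aT tp] tns; apply: hW; first by rewrite aT (lt_trans tp pb).
  by rewrite in_cons negb_or tns andbT lt_eqF.
apply: IH => // t tab tns; apply: hW => //.
rewrite in_cons negb_or tns andbT; apply/eqP => tp; move: napb; rewrite -tp tab.
by [].
Qed.

Lemma is_derive_W (R : realType) (V : R -> R) (k r dV : R) :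
  is_derive r 1 V dV ->
  is_derive r 1 (fun s => (V s + 1) * expR (k * s))
    ((V r + 1) * (k * expR (k * r)) + expR (k * r) * dV).
Proof.
move=> hV.
have h1 : is_derive r 1 (V + cst 1) (dV + 0) by apply: is_deriveD.
have h2 := is_deriveM h1 (@is_derive_expRk R k r).
have -> : (fun s => (V s + 1) * expR (k * s)) = (V + cst 1) * (fun s => expR (k * s)).
  by apply/funext => s.
apply: DeriveDef; first by apply: ex_derive; exact: h2.
rewrite derive_val /GRing.scale /= addr0.
by [].
Qed.

Definition gA {R : realType} {nx m : nat} (f : 'rV[R]_nx * 'rV[R]_m -> 'rV[R]_nx) (rho K1 : R) : R :=
  1 + 4 * K1 ^+ 2 + 4 * K1 ^+ 2 * rho ^+ 2 + 2 * vsq (f (0, 0)).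

Lemma gronwall (R : realType) (nx m : nat) (f : 'rV[R]_nx * 'rV[R]_m -> 'rV[R]_nx)
  (rho K1 : R) (u : R -> 'rV[R]_m) (a b : R) (xa : 'rV[R]_nx) (x : R -> 'rV[R]_nx) :
  0 <= rho ->
  (forall x' x'' u' u'', enorm u' <= rho -> enorm u'' <= rho ->
     enorm (f (x', u') - f (x'', u'')) <= K1 * (enorm (x' - x'') + enorm (u' - u''))) ->
  (forall t, a < t < b -> enorm (u t) <= rho) -> b - a <= 1 ->
  ode_solution f u a b xa x ->
  forall t, a <= t <= b -> enorm (x t) <= 1 + (enorm xa ^+ 2 + 1) * expR (gA f rho K1).
Proof.
move=> rho0 Lip ub ba [xae cx [s ds]] t /andP[aT tb].
set A := gA f rho K1.
have F0ge0 : 0 <= vsq (f (0, 0)) := vsq_ge0 _.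
have A1 : 1 <= A.
  rewrite /A /gA; have := sqr_ge0 K1; have := sqr_ge0 rho; nra.
set V := fun s => vsq (x s).
set W := fun s => (V s + 1) * expR (- A * s).
have cW : {within `[a, b], continuous W}.
  have cV : {within `[a, b], continuous ((fun v => vsq v + 1) \o x)}.
    apply: within_continuous_comp => // v _.
    apply: continuousD; first exact: continuous_vsq.
    exact: cst_continuous.
  have cE : continuous (fun s : R => expR (- A * s)).
    move=> p; apply: differentiable_continuous; apply/derivable1_diffP.
    by apply: ex_derive; exact: (@is_derive_expRk R (- A) p).
  move=> p; change W with (((fun v => vsq v + 1) \o x) \* (fun s => expR (- A * s))).
  apply: continuousM; first exact: cV.
  exact: (continuous_subspaceT cE).
have key : W t <= W a.
  apply: (@nonincr_fin R W s) => //.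
    apply: continuous_subspaceW cW => p /=; rewrite !in_itv /= => /andP[h1 h2].
    by rewrite h1 (le_trans h2 tb).
  move=> r /andP[ar rt] rs.
  have rb : r < b by apply: lt_le_trans rt tb.
  have Dx : is_derive r 1 x (f (x r, u r)) by apply: ds => //; rewrite ar rb.
  set fr := f (x r, u r).
  have dV : is_derive r 1 V (\sum_(i < nx) (2 * x r ord0 i * fr ord0 i)).
    have h := is_derive_sum (fun i => is_derive_sq (is_derive_coord i Dx)).
    rewrite fct_sumE in h; exact: h.
  have dW := is_derive_W (- A) dV.
  split; first by apply: ex_derive; exact: dW.
  rewrite derive1E derive_val.
  have hc := vsq_cross (x r) fr.
  have hs := vsq_split fr (f (0, 0)).
  have ur : enorm (u r) <= rho by apply: ub; rewrite ar rb.
  have hL := Lip (x r) 0 (u r) 0 ur ltac:(by rewrite enorm0).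
  rewrite !subr0 in hL.
  have e0 := enorm_ge0 (fr - f (0,0)).
  have ex0 := enorm_ge0 (x r).
  have eu0 := enorm_ge0 (u r).
  have hsq : vsq (fr - f (0, 0)) <= 2 * K1 ^+ 2 * V r + 2 * K1 ^+ 2 * rho ^+ 2.
    rewrite -enorm_sq /V -enorm_sq.
    case: (lerP 0 K1) => hK.
      have h1 : enorm (fr - f (0, 0)) <= K1 * enorm (x r) + K1 * rho.
        apply: (le_trans hL); rewrite mulrDr lerD2l; exact: ler_wpM2l.
      have := sqr_ge0 (enorm (x r) - rho); rewrite !expr2; nra.
    have : enorm (fr - f (0, 0)) <= 0.
      apply: (le_trans hL); rewrite nmulr_rle0 //; exact: addr_ge0.
    move=> h0; have -> : enorm (fr - f (0, 0)) = 0 by apply/eqP; rewrite eq_le h0 e0.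
    rewrite expr0n /=; have := sqr_ge0 K1; have := sqr_ge0 rho; have := sqr_ge0 (enorm (x r)); nra.
  have eg := expR_gt0 (- A * r).
  have V0 : 0 <= V r by exact: vsq_ge0.
  have K0 := sqr_ge0 K1; have r0 := sqr_ge0 rho.
  have hD : \sum_(i < nx) (2 * x r ord0 i * fr ord0 i) <= A * (V r + 1).
    rewrite /A /gA.
    set D := \sum_(i < nx) _ in hc *.
    set F0 := vsq (f (0, 0)) in hs F0ge0 *.
    set Vr := V r in hsq V0 *.
    have := mulr_ge0 (mulr_ge0 K0 r0) V0.
    have := mulr_ge0 F0ge0 V0.
    have : vsq fr <= 2 * (2 * K1 ^+ 2 * Vr + 2 * K1 ^+ 2 * rho ^+ 2) + 2 * F0.
      apply: (le_trans hs); rewrite lerD2r; apply: ler_wpM2l => //.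
    rewrite /Vr /= in hc *.
    move: hc; rewrite -/(V r) -/Vr => hc.
    nra.
  set e := expR _ in eg *.
  nra.
have Va : V a = enorm xa ^+ 2 by rewrite /V xae enorm_sq.
have E1 : expR (- A * t) * expR (A * t) = 1 by rewrite -expRD mulNr addNr expR0.
have E2 : expR (- A * a) * expR (A * t) <= expR A.
  rewrite -expRD ler_expR; have : t - a <= 1 by apply: le_trans ba; rewrite lerD2r.
  nra.
have hVt : V t + 1 <= (enorm xa ^+ 2 + 1) * expR A.
  have et := expR_gt0 (A * t).
  have := ler_wpM2r (ltW et) key; rewrite /W -mulrA E1 mulr1 -Va -mulrA => h.
  apply: (le_trans h); apply: ler_wpM2l => //.
  by rewrite addr_ge0 // /V vsq_ge0.
apply: (le_trans (le_sq_1 (enorm_ge0 (x t)))).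
rewrite enorm_sq.
rewrite lerD2l; apply: le_trans hVt; by rewrite /V lerDl.
Qed.


Section Alg.
Variables (R : realType) (ny : nat).

Lemma le_pow (x y : R) n : 0 <= x -> x <= y -> x ^+ n <= y ^+ n.
Proof. move=> x0 xy; apply: lerXn2r => //; rewrite nnegrE //; exact: le_trans xy. Qed.

Definition Wn (y : nat -> 'rV[R]_ny) k := \prod_(mm < k) (1 + enorm (y mm.+1)).

Lemma Wn_ge1 y k : 1 <= Wn y k.
Proof.
elim: k => [|k IH]; first by rewrite /Wn big_ord0.
rewrite /Wn big_ord_recr /= -/(Wn y k).
have := enorm_ge0 (y k.+1); nra.
Qed.

Lemma Wn_mono y k d : Wn y k <= Wn y (k + d).
Proof.
elim: d => [|d IH]; first by rewrite addn0.
apply: (le_trans IH); rewrite addnS /Wn big_ord_recr /= -/(Wn y (k + d)).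
have := enorm_ge0 (y (k + d).+1); have := Wn_ge1 y (k + d); nra.
Qed.

Lemma Wn_monoP y k k' : (k <= k')%N -> Wn y k <= Wn y k'.
Proof. by move=> /subnKC <-; exact: Wn_mono. Qed.

Lemma Wn_pow y k D D' : (D <= D')%N -> Wn y k ^+ D <= Wn y k ^+ D'.
Proof. by move=> h; apply: ler_weXn2l => //; exact: Wn_ge1. Qed.

Definition PB k (F : (nat -> 'rV[R]_ny) -> R) :=
  exists M D, 0 <= M /\ forall y, F y <= M * Wn y k ^+ D.

Lemma PB_cst k c : PB k (fun _ => c).
Proof. exists `|c|, 0%N; split => // y; by rewrite expr0 mulr1 ler_norm. Qed.

Lemma PB_le k F G : (forall y, F y <= G y) -> PB k G -> PB k F.
Proof. move=> h [M [D [M0 hG]]]; exists M, D; split => // y; exact: le_trans (h y) (hG y). Qed.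

Lemma PB_add k F G : PB k F -> PB k G -> PB k (fun y => F y + G y).
Proof.
move=> [M1 [D1 [M10 h1]]] [M2 [D2 [M20 h2]]]; exists (M1 + M2), (D1 + D2)%N.
split; first exact: addr_ge0.
move=> y; rewrite mulrDl; apply: lerD.
  apply: (le_trans (h1 y)); apply: ler_wpM2l => //; apply: Wn_pow; exact: leq_addr.
apply: (le_trans (h2 y)); apply: ler_wpM2l => //; apply: Wn_pow; exact: leq_addl.
Qed.

Lemma PB_mul k F G : (forall y, 0 <= F y) -> (forall y, 0 <= G y) ->
  PB k F -> PB k G -> PB k (fun y => F y * G y).
Proof.
move=> F0 G0 [M1 [D1 [M10 h1]]] [M2 [D2 [M20 h2]]]; exists (M1 * M2), (D1 + D2)%N.
split; first exact: mulr_ge0.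
move=> y; rewrite exprD mulrACA; apply: ler_pM => //.
Qed.

Lemma PB_exp k F n : (forall y, 0 <= F y) -> PB k F -> PB k (fun y => F y ^+ n).
Proof.
move=> F0 hF; elim: n => [|n IH].
  by apply: (PB_le (G := fun _ => 1)) => [y|]; [rewrite expr0|exact: PB_cst].
apply: (PB_le (G := fun y => F y * F y ^+ n)) => [y|]; first by rewrite exprS.
apply: PB_mul => // y; exact: exprn_ge0.
Qed.

Lemma PB_mono k k' F : (k <= k')%N -> PB k F -> PB k' F.
Proof.
move=> kk [M [D [M0 h]]]; exists M, D; split => // y.
apply: (le_trans (h y)); apply: ler_wpM2l => //; apply: le_pow.
  exact: le_trans (Wn_ge1 y k).
exact: Wn_monoP.
Qed.

Lemma PB_y k : PB k.+1 (fun y => enorm (y k.+1)).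
Proof.
exists 1, 1%N; split => // y; rewrite expr1 mul1r /Wn big_ord_recr /= -/(Wn y k).
have := enorm_ge0 (y k.+1); have := Wn_ge1 y k; nra.
Qed.


Fixpoint Sq (n E : nat) : seq (seq nat) :=
  match n with
  | 0 => [:: [::]]
  | n'.+1 => [seq 0%N :: j | j <- Sq n' E] ++ [seq E :: j | j <- Sq n' E]
  end.

Lemma Sq_size n E j : j \in Sq n E -> size j = n.
Proof.
elim: n j => [|n IH] j /=; first by rewrite inE => /eqP ->.
by rewrite mem_cat => /orP[] /mapP [j' /IH hj ->] /=; rewrite hj.
Qed.

Lemma Sq_uniq n E : (0 < E)%N -> uniq (Sq n E).
Proof.
move=> E0; elim: n => [|n IH] //=.
rewrite cat_uniq !map_inj_uniq //; try by move=> ? ? [].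
rewrite IH /= andbT; apply/hasPn => j /mapP [j' _ ->]; apply/mapP => [[j'' _ []]].
by move=> h; move: E0; rewrite h.
Qed.

Lemma Sq_expand n E (b : nat -> R) :
  \prod_(mm < n) (1 + b mm ^+ E) = \sum_(j <- Sq n E) \prod_(mm < n) b mm ^+ nth 0%N j mm.
Proof.
elim: n b => [|n IH] b /=; first by rewrite big_ord0 big_seq1 big_ord0.
rewrite big_ord_recl /= (IH (fun k => b k.+1)) big_cat !big_map /= mulrDl mul1r big_distrr /=.
congr (_ + _); apply: eq_bigr => j _; rewrite big_ord_recl /= ?expr0 ?mul1r.
  by apply: eq_bigr => i _.
by congr (_ * _); apply: eq_bigr => i _.
Qed.

Lemma one_plus_pow (a : R) E : 0 <= a -> (1 + a) ^+ E <= 2 ^+ E * (1 + a ^+ E).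
Proof.
move=> a0; have aE := exprn_ge0 E a0.
have h2 : 0 <= 2 ^+ E :> R by exact: exprn_ge0.
case: (lerP a 1) => ha.
  apply: (@le_trans _ _ (2 ^+ E)); first by apply: le_pow; [exact: addr_ge0|lra].
  by rewrite ler_peMr //; lra.
apply: (@le_trans _ _ ((2 * a) ^+ E)); first by apply: le_pow; [exact: addr_ge0|lra].
rewrite exprMn; apply: ler_wpM2l => //; lra.
Qed.

Lemma PB_poly n F : PB n F -> exists (K : seq (seq nat)) (al : seq nat -> R),
  uniq K /\ (forall j, j \in K -> size j = n /\ 0 < al j) /\
  forall y, F y <= poly_bound n.+1 K al y.
Proof.
move=> [M [D [M0 h]]].
set E := D.+1.
exists (Sq n E), (fun _ => (M + 1) * 2 ^+ (E * n)); split; first exact: Sq_uniq.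
split.
  move=> j hj; split; first exact: Sq_size hj.
  by apply: mulr_gt0; [lra|apply: exprn_gt0; lra].
move=> y; apply: (le_trans (h y)).
rewrite /poly_bound /= -big_distrr /= -mulrA.
apply: (@le_trans _ _ ((M + 1) * Wn y n ^+ E)).
  apply: ler_pM => //; first by apply: exprn_ge0; exact: le_trans (Wn_ge1 y n).
    lra.
  by apply: Wn_pow; exact: leqnSn.
apply: ler_wpM2l; first lra.
rewrite -(Sq_expand n E (fun mm => enorm (y mm.+1))) /Wn -prodrXl.
rewrite exprM.
have -> : (2 ^+ E) ^+ n = \prod_(i < n) (2 ^+ E : R) by rewrite prodr_const card_ord.
rewrite -big_split /=.
apply: ler_prod => i _; rewrite exprn_ge0 ?addr_ge0 ?enorm_ge0 //=.
exact: one_plus_pow (enorm_ge0 _).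
Qed.

End Alg.


Fixpoint Bseq (R : realType) (ny : nat) (G : R -> R) (gb : R -> R -> R) (b0 : R)
  (k : nat) (y : nat -> 'rV[R]_ny) : R :=
  match k with
  | 0 => b0
  | k'.+1 => G (gb (Bseq G gb b0 k' y) (enorm (y k'.+1)))
  end.

Lemma natr_succ_sub (R : realType) n : (n.+1%:R : R) - n%:R = 1.
Proof. by rewrite mulrSr addrAC subrr add0r. Qed.

Unset Implicit Arguments.
Theorem proposition7 (R : realType) (T m nx ny : nat) (rho_max : R)
  (f : 'rV[R]_nx * 'rV[R]_m -> 'rV[R]_nx)
  (g : 'rV[R]_nx -> 'rV[R]_ny -> 'rV[R]_nx)
  (c : 'rV[R]_nx -> 'rV[R]_m -> R) (h : 'rV[R]_nx -> R)
  (K1 K2 K3 K4 K5 K6 K7 : R) (L1 L2 L3 : nat) (x0 : 'rV[R]_nx) :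
  (0 < T)%N -> (0 < m)%N -> (0 < nx)%N -> (0 < ny)%N -> 0 < rho_max ->
  (* f continuously differentiable *)
  (forall p, differentiable f p) ->
  (forall v, continuous (fun p => 'd f p v)) ->
  (* f Lipschitz *)
  1 <= K1 ->
  (forall x' x'' u' u'', enorm u' <= rho_max -> enorm u'' <= rho_max ->
     enorm (f (x', u') - f (x'', u'')) <= K1 * (enorm (x' - x'') + enorm (u' - u''))) ->
  (* g continuous, differentiable in x, polynomial bounds *)
  continuous (fun p : 'rV[R]_nx * 'rV[R]_ny => g p.1 p.2) ->
  (forall x y, differentiable (g ^~ y) x) ->
  0 <= K2 -> 0 <= K3 -> 0 <= K4 -> 0 <= K5 -> (0 < L1)%N -> (0 < L2)%N ->
  (forall x y, enorm (g x y) <=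
     K2 + K3 * enorm x ^+ L1 + K4 * enorm y ^+ L2 + K5 * enorm x ^+ L1 * enorm y ^+ L2) ->
  (forall x y v, enorm ('d (g ^~ y) x v) <=
     (K2 + K3 * enorm x ^+ L1 + K4 * enorm y ^+ L2 + K5 * enorm x ^+ L1 * enorm y ^+ L2)
     * enorm v) ->
  (* c continuous, continuously differentiable in x; h differentiable *)
  continuous (fun p : 'rV[R]_nx * 'rV[R]_m => c p.1 p.2) ->
  (forall u x, differentiable (c ^~ u) x) ->
  (forall u v, continuous (fun x => 'd (c ^~ u) x v)) ->
  (forall x, differentiable h x) ->
  0 <= K6 -> 0 <= K7 -> (0 < L3)%N ->
  (forall x u, enorm u <= rho_max -> `|c x u| <= K6 + K7 * enorm x ^+ L3) ->
  (forall x u v, enorm u <= rho_max ->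
     `|'d (c ^~ u) x v| <= (K6 + K7 * enorm x ^+ L3) * enorm v) ->
  (forall x, `|h x| <= K6 + K7 * enorm x ^+ L3) ->
  (forall x v, `|'d h x v| <= (K6 + K7 * enorm x ^+ L3) * enorm v) ->
  exists alpha1 : R, 0 < alpha1 /\
  exists (KK : nat -> seq (seq nat)) (alpha : nat -> seq nat -> R),
    (forall i, (2 <= i <= T.+1)%N ->
       uniq (KK i) /\
       (forall j, j \in KK i -> size j = i.-1 /\ 0 < alpha i j)) /\
    (forall (u : R -> 'rV[R]_m) (y : nat -> 'rV[R]_ny) (xs : nat -> R -> 'rV[R]_nx),
       admissible_control T rho_max u ->
       hybrid_trajectory T f g x0 u y xs ->
       (forall t, 0 <= t <= 1 -> `|c (xs 1%N t) (u t)| <= alpha1) /\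
       (forall i t, (2 <= i <= T)%N -> (i.-1)%:R <= t <= i%:R ->
          `|c (xs i t) (u t)| <= poly_bound i (KK i) (alpha i) y) /\
       `|h (final_state T g y xs)| <= poly_bound T.+1 (KK T.+1) (alpha T.+1) y).
Proof.
move=> T0 m0 nx0 ny0 rho0 df cdf K1ge1 Lip cg dg K20 K30 K40 K50 L10 L20 gbd dgbd
  cc dc cdc dh K60 K70 L30 cbd dcbd hbd dhbd.
set A := gA f rho_max K1.
pose G := fun r : R => 1 + (r ^+ 2 + 1) * expR A.
pose gb := fun r s : R => K2 + K3 * r ^+ L1 + K4 * s ^+ L2 + K5 * r ^+ L1 * s ^+ L2.
pose B := @Bseq R ny G gb (G (enorm x0)).
have eA : 0 <= expR A := ltW (expR_gt0 A).
have G0 : forall r, 0 <= G r.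
  move=> r; rewrite /G; apply: addr_ge0 => //; apply: mulr_ge0 => //.
  by apply: addr_ge0; rewrite ?sqr_ge0.
have Gmono : forall r r', 0 <= r -> r <= r' -> G r <= G r'.
  move=> r r' r0 rr; rewrite /G lerD2l; apply: ler_wpM2r => //; rewrite lerD2r.
  exact: le_pow.
have gb0 : forall r s, 0 <= r -> 0 <= s -> 0 <= gb r s.
  move=> r s r0 s0; rewrite /gb.
  by rewrite !addr_ge0 ?mulr_ge0 ?exprn_ge0.
have gbmono : forall r r' s, 0 <= r -> r <= r' -> 0 <= s -> gb r s <= gb r' s.
  move=> r r' s r0 rr s0; rewrite /gb.
  have hp := le_pow L1 r0 rr; have s2 := exprn_ge0 L2 s0.
  apply: lerD; last by apply: ler_wpM2r => //; apply: ler_wpM2l.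
  apply: lerD => //; apply: lerD => //; exact: ler_wpM2l.
have B0 : forall k y, 0 <= B k y by move=> [|k] y; apply: G0.
have gbd' : forall x y, enorm (g x y) <= gb (enorm x) (enorm (y)) by [].
have rho0' : 0 <= rho_max := ltW rho0.
have traj : forall u y xs, admissible_control T rho_max u ->
    hybrid_trajectory T f g x0 u y xs -> forall k, (k.+1 <= T)%N ->
    forall t, k%:R <= t <= k.+1%:R -> enorm (xs k.+1 t) <= B k y.
  move=> u y xs [_ ub] [h1 h2]; elim => [|k IH] kT t tin.
    have := gronwall rho0' Lip _ _ h1 tin; apply.
      move=> r /andP[r0 r1]; apply: ub; rewrite (ltW r0) /=.
      apply: (le_trans (ltW r1)); by rewrite ler1n.
    by rewrite subr0.
  have ode := h2 k.+2 ltac:(by rewrite kT andTb).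
  have hg := gronwall rho0' Lip _ _ ode tin.
  apply: (le_trans (hg _ _)).
  - move=> r /andP[r0 r1]; apply: ub; rewrite (le_trans _ (ltW r0)) //=.
    apply: (le_trans (ltW r1)); by rewrite ler_nat.
  - by rewrite natr_succ_sub.
  rewrite /= -/(G _); apply: Gmono; first exact: enorm_ge0.
  apply: (le_trans (gbd _ _)); apply: gbmono => //; try exact: enorm_ge0.
  apply: IH; first exact: ltnW.
  by rewrite lexx andbT ler_nat.
have PBG : forall k (F : (nat -> 'rV[R]_ny) -> R), (forall y, 0 <= F y) ->
    PB k F -> PB k (fun y => G (F y)).
  move=> k F F0 hF; rewrite /G; apply: PB_add; first exact: PB_cst.
  apply: PB_mul => //; first by move=> y; rewrite addr_ge0 ?sqr_ge0.
    apply: PB_add; last exact: PB_cst.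
    exact: PB_exp.
  exact: PB_cst.
have PBgb : forall k (F H : (nat -> 'rV[R]_ny) -> R), (forall y, 0 <= F y) ->
    (forall y, 0 <= H y) -> PB k F -> PB k H -> PB k (fun y => gb (F y) (H y)).
  move=> k F H F0 H0 hF hH; rewrite /gb.
  have eF : forall y, 0 <= F y ^+ L1 by move=> y; exact: exprn_ge0.
  have eH : forall y, 0 <= H y ^+ L2 by move=> y; exact: exprn_ge0.
  have pF : PB k (fun y => F y ^+ L1) by exact: PB_exp.
  have pH : PB k (fun y => H y ^+ L2) by exact: PB_exp.
  apply: PB_add; first apply: PB_add; first apply: PB_add.
  - exact: PB_cst.
  - by apply: PB_mul => //; exact: PB_cst.
  - by apply: PB_mul => //; exact: PB_cst.
  apply: (PB_mul (F := fun y => K5 * F y ^+ L1) (G := fun y => H y ^+ L2)) => //.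
    by move=> y; apply: mulr_ge0.
  by apply: PB_mul => //; exact: PB_cst.
have PBB : forall k, PB k (B k).
  elim => [|k IH]; first exact: PB_cst.
  apply: (PBG _ (fun y => gb (B k y) (enorm (y k.+1)))).
    by move=> y; apply: gb0; [exact: B0 | exact: enorm_ge0].
  apply: PBgb; [exact: B0 | move=> y; exact: enorm_ge0 | | exact: PB_y].
  apply: PB_mono IH; exact: leqnSn.
pose Ft := fun i => if (i <= T)%N then (fun y => K6 + K7 * B i.-1 y ^+ L3)
  else (fun y => K6 + K7 * gb (B T.-1 y) (enorm (y T)) ^+ L3).
have PBF : forall i, (2 <= i <= T.+1)%N -> PB i.-1 (Ft i).
  move=> i /andP[i2 iT]; rewrite /Ft; case: ifP => iT'.
    apply: PB_add; first exact: PB_cst.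
    apply: PB_mul => //; first by move=> y; exact: exprn_ge0.
      exact: PB_cst.
    exact: PB_exp.
  have -> : i = T.+1 by apply/eqP; rewrite eqn_leq iT ltnNge iT'.
  apply: PB_add; first exact: PB_cst.
  apply: PB_mul => //; first by move=> y; apply: exprn_ge0; apply: gb0 => //; exact: enorm_ge0.
    exact: PB_cst.
  apply: PB_exp; first by move=> y; apply: gb0 => //; exact: enorm_ge0.
  apply: PBgb; [exact: B0 | move=> y; exact: enorm_ge0 | | ].
    apply: PB_mono (PBB T.-1); exact: leq_pred.
  by have := PB_y R ny T.-1; rewrite prednK.
have ch : forall i, exists p : seq (seq nat) * (seq nat -> R), (2 <= i <= T.+1)%N ->
    [/\ uniq p.1, (forall j, j \in p.1 -> size j = i.-1 /\ 0 < p.2 j) &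
    forall y, Ft i y <= poly_bound i p.1 p.2 y].
  move=> i; case: (boolP (2 <= i <= T.+1)%N) => hi; last by exists ([::], fun _ => 0).
  have [K [al [uK [hK hF]]]] := PB_poly (PBF i hi).
  exists (K, al) => _ /=; split => //.
have [e he] := choice ch.
have B0x : 0 <= K7 * G (enorm x0) ^+ L3 by apply: mulr_ge0 => //; exact: exprn_ge0.
exists (K6 + K7 * G (enorm x0) ^+ L3 + 1); split; first lra.
exists (fun i => (e i).1), (fun i => (e i).2); split.
  by move=> i hi; have [] := he i hi.
move=> u y xs adm hyb.
have uT : forall t, 0 <= t <= T%:R -> enorm (u t) <= rho_max by case: adm.
split; [|split].
- move=> t /andP[t0 t1].
  have ut : enorm (u t) <= rho_max.
    by apply: uT; rewrite t0 (le_trans t1) // ler1n.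
  apply: (le_trans (cbd _ _ ut)).
  have hx := traj u y xs adm hyb 0%N T0 t ltac:(by rewrite t0 t1).
  have : K6 + K7 * enorm (xs 1%N t) ^+ L3 <= K6 + K7 * G (enorm x0) ^+ L3.
    rewrite lerD2l; apply: ler_wpM2l => //; apply: le_pow => //; exact: enorm_ge0.
  lra.
- move=> i t hi /andP[t1 t2].
  have i1 : (0 < i)%N by case/andP: hi => hh _; exact: leq_trans hh.
  have hi' : (2 <= i <= T.+1)%N by case/andP: hi => -> hh; exact: leqW.
  have ut : enorm (u t) <= rho_max.
    apply: uT; rewrite (le_trans _ t1) //= (le_trans t2) // ler_nat.
    by case/andP: hi.
  apply: (le_trans (cbd _ _ ut)); apply: (le_trans _ (let: And3 _ _ hh := he i hi' in hh y)).
  rewrite /Ft; case/andP: hi => _ iT; rewrite iT.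
  rewrite lerD2l; apply: ler_wpM2l => //; apply: le_pow; first exact: enorm_ge0.
  have := traj u y xs adm hyb i.-1 ltac:(by rewrite prednK) t.
  rewrite prednK //; apply; by rewrite t1 t2.
- rewrite /final_state; apply: (le_trans (hbd _)).
  have hT : (2 <= T.+1 <= T.+1)%N by rewrite leqnn andbT ltnS.
  apply: (le_trans _ (let: And3 _ _ hh := he T.+1 hT in hh y)).
  rewrite /Ft ltnn lerD2l; apply: ler_wpM2l => //; apply: le_pow; first exact: enorm_ge0.
  apply: (le_trans (gbd _ _)); apply: gbmono; try exact: enorm_ge0.
  have := traj u y xs adm hyb T.-1 ltac:(by rewrite prednK) T%:R.
  rewrite prednK //; apply; by rewrite lexx andbT ler_nat leq_pred.
Qed.
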